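(* Let $k\ge2$, $\eta\in[0,1)$ and $c>0$. The equation $(1-\zeta)\,x_k^\ast(c,\zeta)^k\,c^{-k}=\eta$ has a unique solution $\zeta\in[0,1]$. Moreover, if $c<\overline c_k(\eta)$ then this solution satisfies $(k-1)\zeta c^{k-1}<e$.
   Context: $W$ is the Lambert $W$ function; $x_k^\ast(c,\zeta)=\left(\frac{W((k-1)c^{k-1}\zeta)}{(k-1)\zeta}\right)^{\frac1{k-1}}$ for $\zeta\in(0,1]$ and $x_k^\ast(c,0)=c$. $\eta_k^\ast=e^{-k/(k-1)}$; $\overline c_k(\eta)=\left(\frac{e}{(k-1)(1-\eta/\eta_k^\ast)}\right)^{\frac1{k-1}}$ if $\eta<\eta_k^\ast$ and $+\infty$ otherwise. *)

(* Defs.v *)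
From Stdlib Require Import Reals ClassicalEpsilon.
From Coquelicot Require Import Rbar.
Open Scope R_scope.

(* Principal branch of the Lambert W function on [0, +oo):
   W x is the unique w >= 0 with w * exp w = x (for x >= 0). Only
   nonnegative arguments are used below. *)
Definition LambertW (x : R) : R :=
  epsilon (inhabits 0%R) (fun w => 0 <= w /\ w * exp w = x).

Definition xstar (k : nat) (c zeta : R) : R :=
  if Req_EM_T zeta 0 then c
  else Rpower (LambertW (INR (k - 1) * c ^ (k - 1) * zeta) / (INR (k - 1) * zeta))
              (/ INR (k - 1)).

Definition etastar (k : nat) : R := exp (- (INR k / INR (k - 1))).

Definition cbar (k : nat) (eta : R) : Rbar :=
  if Rlt_dec eta (etastar k) then
    Finite (Rpower (exp 1 / (INR (k - 1) * (1 - eta / etastar k))) (/ INR (k - 1)))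
  else p_infty.

(* Main.v *)
Require Import Defs.
From Stdlib Require Import Reals Lra Lia ClassicalEpsilon.
From Coquelicot Require Import Rbar.
Open Scope R_scope.

Lemma exp_pow_n (x : R) (n : nat) : exp x ^ n = exp (INR n * x).
Proof.
  induction n as [|n IH].
  - simpl. rewrite Rmult_0_l, exp_0; reflexivity.
  - change (exp x ^ S n) with (exp x * exp x ^ n). rewrite IH, S_INR, <- exp_plus. f_equal; ring.
Qed.

Lemma u_strict (a b : R) : 0 <= a -> a < b -> a * exp a < b * exp b.
Proof.
  intros Ha Hab.
  pose proof (exp_increasing _ _ Hab). pose proof (exp_pos a).
  nra.
Qed.

Lemma u_le (a b : R) : 0 <= a -> a <= b -> a * exp a <= b * exp b.
Proof.
  intros Ha Hab. destruct (Req_dec a b) as [->|]; [lra|].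
  left; apply u_strict; lra.
Qed.

Lemma W_spec (a : R) : 0 <= a -> 0 <= LambertW a /\ LambertW a * exp (LambertW a) = a.
Proof.
  intros Ha. unfold LambertW. apply epsilon_spec.
  destruct (IVT_cor (fun w => w * exp w - a) 0 a) as [z [[Hz1 Hz2] Hz]].
  - reg.
  - exact Ha.
  - rewrite Rmult_0_l. pose proof (exp_ineq1_le a). pose proof (exp_pos a). nra.
  - exists z. split; [lra|]. simpl in Hz. lra.
Qed.

Lemma W_inv (w : R) : 0 <= w -> LambertW (w * exp w) = w.
Proof.
  intros Hw.
  assert (H0 : 0 <= w * exp w) by (pose proof (exp_pos w); nra).
  destruct (W_spec _ H0) as [H1 H2].
  destruct (Rtotal_order (LambertW (w * exp w)) w) as [Hl|[He|Hl]]; auto.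
  - pose proof (u_strict _ _ H1 Hl). lra.
  - pose proof (u_strict _ _ Hw Hl). lra.
Qed.

Lemma div_le1 (x M : R) : 0 < M -> x <= M -> x / M <= 1.
Proof. intros. apply (Rmult_le_reg_r M); auto. unfold Rdiv. rewrite Rmult_assoc, Rinv_l; lra. Qed.
Lemma div_lt1 (x M : R) : 0 < M -> x < M -> x / M < 1.
Proof. intros. apply (Rmult_lt_reg_r M); auto. unfold Rdiv. rewrite Rmult_assoc, Rinv_l; lra. Qed.

Section S.
Variables (n : nat) (c : R).
Hypothesis hn : (1 <= n)%nat.
Hypothesis hc : 0 < c.

Let m := INR n.
Let M := m * c ^ n.

Lemma m_pos : 0 < m.
Proof. unfold m. apply lt_0_INR. lia. Qed.

Lemma M_pos : 0 < M.
Proof. unfold M. pose proof m_pos. pose proof (pow_lt c n hc). nra. Qed.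

Definition F (w : R) := (1 - w * exp w / M) * exp (- (INR (S n) / m * w)).

Lemma F_cont : continuity F.
Proof. unfold F. reg. Qed.

Lemma F_strict (a b : R) : 0 <= a -> a < b -> b * exp b <= M -> F b < F a.
Proof.
  intros Ha Hab HbM. unfold F.
  pose proof (u_strict _ _ Ha Hab) as Hu. pose proof M_pos.
  assert (Hk : 0 < INR (S n) / m).
  { pose proof m_pos. apply Rdiv_lt_0_compat; auto. apply lt_0_INR; lia. }
  assert (He : exp (- (INR (S n) / m * b)) < exp (- (INR (S n) / m * a))).
  { apply exp_increasing. nra. }
  pose proof (exp_pos (- (INR (S n) / m * b))).
  assert (H1 : 0 <= 1 - b * exp b / M).
  { assert (b * exp b / M <= 1) by (apply div_le1; auto; lra). lra. }
  assert (H2 : 1 - b * exp b / M < 1 - a * exp a / M).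
  { assert (a * exp a / M < b * exp b / M) by (apply Rmult_lt_compat_r; [apply Rinv_0_lt_compat; auto|]; auto). lra. }
  nra.
Qed.

Lemma key (zeta : R) : 0 < zeta ->
  let w := LambertW (M * zeta) in
  0 <= w /\ w * exp w = M * zeta /\
  (1 - zeta) * xstar (S n) c zeta ^ (S n) / c ^ (S n) = F w.
Proof.
  intros Hz w.
  pose proof M_pos. pose proof m_pos.
  assert (Ha : 0 <= M * zeta) by nra.
  destruct (W_spec _ Ha) as [Hw1 Hw2]. fold w in Hw1, Hw2.
  split; [auto|split; [auto|]].
  assert (Hx : xstar (S n) c zeta = exp (- w / m) * c).
  { unfold xstar. destruct (Req_EM_T zeta 0) as [|_]; [lra|].
    replace (S n - 1)%nat with n by lia. fold m.
    replace (m * c ^ n * zeta) with (M * zeta) by (unfold M; ring). fold w.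
    assert (Hq : w / (m * zeta) = exp (- w) * c ^ n).
    { rewrite exp_Ropp. pose proof (exp_pos w).
      assert (Hne : w * exp w <> 0) by (rewrite Hw2; nra).
      assert (w <> 0) by (intro Hw0; apply Hne; rewrite Hw0; ring).
      apply (Rmult_eq_reg_r (m * zeta * exp w)); [|apply Rgt_not_eq; repeat apply Rmult_lt_0_compat; auto; apply exp_pos].
      field_simplify; try lra.
      replace (w * exp w) with (M * zeta) by lra. unfold M. field; lra. }
    rewrite Hq. unfold Rpower.
    pose proof (pow_lt c n hc).
    rewrite ln_mult, ln_exp, ln_pow; auto using exp_pos. fold m.
    replace (/ m * (- w + m * ln c)) with (- w / m + ln c) by (field; lra).
    rewrite exp_plus, exp_ln; auto. }
  rewrite Hx, Rpow_mult_distr, exp_pow_n. unfold F.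
  pose proof (pow_lt c (S n) hc).
  replace (INR (S n) * (- w / m)) with (- (INR (S n) / m * w)) by (field; lra).
  replace zeta with (w * exp w / M) at 1 by (rewrite Hw2; field; lra).
  field; lra.
Qed.

Lemma val0 : (1 - 0) * xstar (S n) c 0 ^ (S n) / c ^ (S n) = 1.
Proof.
  unfold xstar. destruct (Req_EM_T 0 0); [|lra].
  pose proof (pow_lt c (S n) hc). field. lra.
Qed.

End S.

Theorem mainTheorem14 (k : nat) (eta c : R)
  (hk : (2 <= k)%nat) (heta0 : 0 <= eta) (heta1 : eta < 1) (hc : 0 < c) :
  (exists! zeta : R, 0 <= zeta <= 1 /\
     (1 - zeta) * xstar k c zeta ^ k / c ^ k = eta) /\
  (Rbar_lt (Finite c) (cbar k eta) ->
   forall zeta : R, 0 <= zeta <= 1 ->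
     (1 - zeta) * xstar k c zeta ^ k / c ^ k = eta ->
     INR (k - 1) * zeta * c ^ (k - 1) < exp 1).
Proof.
  destruct k as [|n]; [lia|].
  assert (hn : (1 <= n)%nat) by lia.
  replace (S n - 1)%nat with n by lia.
  pose proof (M_pos n c hn hc) as HM.
  pose proof (m_pos n hn) as Hm.
  set (M := INR n * c ^ n) in *.
  assert (Hsol : forall zeta, 0 <= zeta <= 1 ->
     (1 - zeta) * xstar (S n) c zeta ^ S n / c ^ S n = eta ->
     0 < zeta /\ exists w, 0 <= w /\ w * exp w = M * zeta /\ F n c w = eta).
  { intros z Hz Heq.
    assert (0 < z).
    { destruct (Req_dec z 0) as [->|]; [|lra].
      rewrite (val0 n c hc) in Heq. lra. }
    split; auto.
    destruct (key n c hn hc z H) as [A [B C]].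
    exists (LambertW (M * z)). repeat split; auto. unfold M. rewrite <- C. auto. }
  split.
  -
    destruct (W_spec M (Rlt_le _ _ HM)) as [Hw1 Hw2].
    set (w1 := LambertW M) in *.
    destruct (IVT_cor (fun w => F n c w - eta) 0 w1) as [w0 [[H01 H02] Hw0]].
    + apply continuity_minus; [apply F_cont|apply continuity_const; intros ? ?; reflexivity].
    + auto.
    + assert (F n c 0 = 1) by (unfold F; rewrite !Rmult_0_l, Rmult_0_r, Ropp_0, exp_0; unfold Rdiv; rewrite Rmult_0_l; ring).
      assert (F n c w1 = 0) by (unfold F; fold M; rewrite Hw2; unfold Rdiv; rewrite Rinv_r by lra; ring).
      rewrite H, H0. nra.
    + simpl in Hw0.
      pose proof (u_le _ _ H01 H02) as Hu.
      assert (Hz0 : 0 < w0).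
      { destruct (Req_dec w0 0) as [->|]; [|lra].
        unfold F in Hw0. rewrite Rmult_0_l, Rmult_0_r, Ropp_0, exp_0 in Hw0.
        assert (1 - 0 * exp 0 / M = 1) by (field; lra). lra. }
      set (z0 := w0 * exp w0 / M).
      assert (Hzp : 0 < z0) by (unfold z0; pose proof (exp_pos w0); apply Rdiv_lt_0_compat; nra).
      assert (Hz1 : z0 <= 1) by (unfold z0; apply div_le1; lra).
      exists z0. split.
      * split; [lra|].
        destruct (key n c hn hc z0 Hzp) as [_ [_ C]]. rewrite C. fold M.
        replace (M * z0) with (w0 * exp w0) by (unfold z0; field; lra).
        rewrite W_inv by lra. lra.
      * intros z' [Hz' Heq].
        destruct (Hsol z' Hz' Heq) as [Hzp' [w' [Hw'1 [Hw'2 Hw'3]]]].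
        assert (w' = w0).
        { destruct (Rtotal_order w' w0) as [Hl|[He|Hl]]; auto.
          - assert (w0 * exp w0 <= M) by lra. pose proof (F_strict n c hn hc w' w0 Hw'1 Hl H). lra.
          - assert (w' * exp w' <= M) by (rewrite Hw'2; nra). pose proof (F_strict n c hn hc w0 w' (Rlt_le _ _ Hz0) Hl H). lra. }
        subst w'. unfold z0. apply (Rmult_eq_reg_l M); [|lra].
        rewrite <- Hw'2. field. lra.
  - intros Hlt z Hz Heq.
    destruct (Hsol z Hz Heq) as [Hzp [w [Hw1 [Hw2 Hw3]]]].
    replace (INR n * z * c ^ n) with (w * exp w) by (unfold M in Hw2; lra).
    assert (Hw : w < 1).
    { destruct (Rlt_or_le w 1) as [|Hge]; auto. exfalso.
      assert (Hk : 0 < INR (S n)) by (apply lt_0_INR; lia).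
      set (E := exp (- (INR (S n) / INR n * w))).
      assert (HE : E <= etastar (S n)).
      { unfold E, etastar. replace (S n - 1)%nat with n by lia.
        destruct (Req_dec w 1) as [->|]; [right; f_equal; field; lra|].
        left. apply exp_increasing.
        assert (0 < INR (S n) / INR n) by (apply Rdiv_lt_0_compat; auto).
        replace (- (INR (S n) / INR n)) with (- (INR (S n) / INR n * 1)) by ring. nra. }
      assert (HEp : 0 < E) by apply exp_pos.
      assert (HF : F n c w = (1 - z) * E).
      { unfold F, E. fold M. replace (w * exp w / M) with z by (rewrite Hw2; field; lra). reflexivity. }
      pose proof (u_le _ _ Rle_0_1 Hge) as Hu. rewrite Rmult_1_l in Hu.
      unfold cbar in Hlt.
      destruct (Rlt_dec eta (etastar (S n))) as [Hes|Hes].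
      + simpl in Hlt. replace (n - 0)%nat with n in Hlt by lia.
        assert (Hes0 : 0 < etastar (S n)) by (unfold etastar; apply exp_pos).
        assert (HA : 0 < exp 1 / (INR n * (1 - eta / etastar (S n)))).
        { apply Rdiv_lt_0_compat; [apply exp_pos|].
          apply Rmult_lt_0_compat; auto.
          assert (eta / etastar (S n) < 1) by (apply div_lt1; auto). lra. }
        set (A := exp 1 / (INR n * (1 - eta / etastar (S n)))) in *.
        assert (Hcn : c ^ n < A).
        { assert (Hp : forall x y p, 0 <= x < y -> (1 <= p)%nat -> x ^ p < y ^ p).
          { intros x y p Hxy Hp. induction p as [|p IH]; [lia|].
            destruct p. { simpl. lra. }
            assert (x ^ S p < y ^ S p) by (apply IH; lia).
            pose proof (pow_le x (S p) (proj1 Hxy)). simpl in *. nra. }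
          pose proof (Hp _ _ n (conj (Rlt_le _ _ hc) Hlt) hn) as H.
          rewrite <- (Rpower_pow n (Rpower A (/ INR n))) in H by (unfold Rpower; apply exp_pos).
          rewrite Rpower_mult, Rinv_l, Rpower_1 in H; auto; lra. }
        assert (HMA : M < exp 1 / (1 - eta / etastar (S n))).
        { unfold A in Hcn. unfold M.
          assert (0 < 1 - eta / etastar (S n)).
          { assert (eta / etastar (S n) < 1) by (apply div_lt1; auto). lra. }
          replace (exp 1 / (1 - eta / etastar (S n))) with
            (INR n * (exp 1 / (INR n * (1 - eta / etastar (S n))))) by (field; lra).
          apply Rmult_lt_compat_l; auto. }
        assert (0 < 1 - eta / etastar (S n)).
        { assert (eta / etastar (S n) < 1) by (apply div_lt1; auto). lra. }
        assert (HMz : M * (1 - eta / etastar (S n)) < M * z).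
        { apply Rlt_le_trans with (exp 1).
          - apply (Rmult_lt_compat_r (1 - eta / etastar (S n))) in HMA; auto.
            replace (exp 1 / (1 - eta / etastar (S n)) * (1 - eta / etastar (S n))) with (exp 1) in HMA by (field; lra). lra.
          - lra. }
        assert (Hz' : 1 - eta / etastar (S n) < z) by (apply (Rmult_lt_reg_l M); auto).
        assert (Hez : (1 - z) * etastar (S n) < eta).
        { assert (1 - z < eta / etastar (S n)) by lra.
          apply (Rmult_lt_compat_r (etastar (S n))) in H0; auto.
          replace (eta / etastar (S n) * etastar (S n)) with eta in H0 by (field; lra). lra. }
        assert ((1 - z) * E <= (1 - z) * etastar (S n)) by (apply Rmult_le_compat_l; lra).
        lra.
      + assert ((1 - z) * E < E) by nra. lra. }
    pose proof (u_strict _ _ Hw1 Hw). lra.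
Qed.
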